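(* Let $X$ be a non-degenerate random variable with $E|X|<\infty$ and continuous cumulative distribution function, and suppose that the expectile function $\alpha\mapsto e_X(\alpha)$ is four times continuously differentiable on $(0,1)$. Then $s_2$ is differentiable on $(0,1/2)$ and $$\lim_{\alpha\to 1/2-} s_2'(\alpha) = 0 .$$
   Context: For a random variable $X$ with $E|X|<\infty$ and $\tau\in(0,1)$, the $\tau$-expectile $e_X(\tau)$ is the unique real number $t$ satisfying $\tau\, E(X-t)_+ = (1-\tau)\, E(X-t)_-$, where $x_+=\max\{x,0\}$ and $x_-=\max\{-x,0\}$; $e_X(1/2)=\mu=EX$. For $\alpha\in(0,1/2)$ the normalized expectile skewness is $$s_2(\alpha) = \frac{1}{1-2\alpha}\cdot\frac{e_X(1-\alpha)+e_X(\alpha)-2\mu}{e_X(1-\alpha)-e_X(\alpha)}.$$ *)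

(* Defs.v *)
From Stdlib Require Import Reals Lra.
Open Scope R_scope.

(* The law of a real random variable X is encoded by its cumulative
   distribution function F(x) = P(X <= x): nondecreasing, right-continuous,
   with limits 0 at -infinity and 1 at +infinity. *)
Definition is_cdf (F : R -> R) : Prop :=
  (forall x y, x <= y -> F x <= F y) /\
  (forall x eps, 0 < eps -> exists d, 0 < d /\
       forall y, x <= y < x + d -> Rabs (F y - F x) < eps) /\
  (forall eps, 0 < eps -> exists M, forall x, x <= M -> Rabs (F x) < eps) /\
  (forall eps, 0 < eps -> exists M, forall x, M <= x -> Rabs (1 - F x) < eps).

(* Non-degenerate: X is not a.s. constant, i.e. 0 < F x < 1 for some x. *)
Definition nondegenerate (F : R -> R) : Prop :=
  exists x, 0 < F x < 1.

Definition improper_int_to_pinfty (f : R -> R) (a l : R) : Prop :=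
  forall eps, 0 < eps -> exists M, forall b, M <= b ->
    exists pr : Riemann_integrable f a b, Rabs (RiemannInt pr - l) < eps.

Definition improper_int_from_minfty (f : R -> R) (b l : R) : Prop :=
  forall eps, 0 < eps -> exists M, forall a, a <= M ->
    exists pr : Riemann_integrable f a b, Rabs (RiemannInt pr - l) < eps.

(* E (X - t)_+ = int_t^{+oo} (1 - F x) dx  and
   E (X - t)_- = int_{-oo}^t F x dx   (valid for every law with cdf F). *)
Definition Epos (F : R -> R) (t l : R) : Prop :=
  improper_int_to_pinfty (fun x => 1 - F x) t l.
Definition Eneg (F : R -> R) (t l : R) : Prop :=
  improper_int_from_minfty F t l.

(* E|X| < oo  iff  E X_+ and E X_- are finite. *)
Definition finite_first_moment (F : R -> R) : Prop :=
  exists p n, Epos F 0 p /\ Eneg F 0 n.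

Definition is_mean (F : R -> R) (mu : R) : Prop :=
  exists p n, Epos F 0 p /\ Eneg F 0 n /\ mu = p - n.

Definition is_expectile (F : R -> R) (tau t : R) : Prop :=
  exists p n, Epos F t p /\ Eneg F t n /\ tau * p = (1 - tau) * n.

Definition C4_on_01 (e : R -> R) : Prop :=
  exists d1 d2 d3 d4 : R -> R, forall a, 0 < a < 1 ->
    derivable_pt_lim e a (d1 a) /\ derivable_pt_lim d1 a (d2 a) /\
    derivable_pt_lim d2 a (d3 a) /\ derivable_pt_lim d3 a (d4 a) /\
    continuity_pt d4 a.

Definition s2 (e : R -> R) (mu alpha : R) : R :=
  (1 / (1 - 2 * alpha)) *
  ((e (1 - alpha) + e alpha - 2 * mu) / (e (1 - alpha) - e alpha)).

(* Main.v *)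
Require Import Defs.
From Stdlib Require Import Reals Lra.
From Coquelicot Require Import Coquelicot.
Open Scope R_scope.

Lemma dval f x a b : derivable_pt_lim f x a -> a = b -> derivable_pt_lim f x b.
Proof. intros H ->; exact H. Qed.
Lemma dplus f g x a b : derivable_pt_lim f x a -> derivable_pt_lim g x b ->
  derivable_pt_lim (fun y => f y + g y) x (a + b).
Proof. intros; apply (derivable_pt_lim_plus f g); auto. Qed.
Lemma dminus f g x a b : derivable_pt_lim f x a -> derivable_pt_lim g x b ->
  derivable_pt_lim (fun y => f y - g y) x (a - b).
Proof. intros; apply (derivable_pt_lim_minus f g); auto. Qed.
Lemma dmult f g x a b : derivable_pt_lim f x a -> derivable_pt_lim g x b ->
  derivable_pt_lim (fun y => f y * g y) x (a * g x + f x * b).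
Proof. intros; apply (derivable_pt_lim_mult f g); auto. Qed.
Lemma ddiv f g x a b : derivable_pt_lim f x a -> derivable_pt_lim g x b -> g x <> 0 ->
  derivable_pt_lim (fun y => f y / g y) x ((a * g x - b * f x) / (g x * g x)).
Proof. intros; apply (derivable_pt_lim_div f g); auto. Qed.
Lemma dconst c x : derivable_pt_lim (fun _ => c) x 0.
Proof. apply derivable_pt_lim_const. Qed.
Lemma did x : derivable_pt_lim (fun y => y) x 1.
Proof. apply derivable_pt_lim_id. Qed.
Lemma dcomp g f x a l : derivable_pt_lim f x a -> derivable_pt_lim g (f x) l ->
  derivable_pt_lim (fun y => g (f y)) x (l * a).
Proof. intros H1 H2. exact (derivable_pt_lim_comp f g x a l H1 H2). Qed.

Lemma shiftp g s l : derivable_pt_lim g (1/2 + s) l ->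
  derivable_pt_lim (fun y => g (1/2 + y)) s l.
Proof.
  intro H. eapply dval. apply (dcomp g (fun y => 1/2 + y)).
  eapply dval. apply dplus. apply dconst. apply did. reflexivity. exact H. ring.
Qed.
Lemma shiftm g s l : derivable_pt_lim g (1/2 - s) l ->
  derivable_pt_lim (fun y => g (1/2 - y)) s (- l).
Proof.
  intro H. eapply dval. apply (dcomp g (fun y => 1/2 - y)).
  eapply dval. apply dminus. apply dconst. apply did. reflexivity. exact H. ring.
Qed.
Lemma onem g s l : derivable_pt_lim g (1 - s) l ->
  derivable_pt_lim (fun y => g (1 - y)) s (- l).
Proof.
  intro H. eapply dval. apply (dcomp g (fun y => 1 - y)).
  eapply dval. apply dminus. apply dconst. apply did. reflexivity. exact H. ring.
Qed.

Lemma mvt_bound g g' K h : 0 <= h ->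
  (forall s, 0 <= s <= h -> derivable_pt_lim g s (g' s)) ->
  (forall s, 0 <= s <= h -> Rabs (g' s) <= K) ->
  Rabs (g h - g 0) <= K * h.
Proof.
  intros Hh Hd Hb. destruct (Req_dec h 0) as [->|Hn].
  - rewrite Rminus_diag, Rabs_R0; lra.
  - destruct (MVT_cor2 g g' 0 h) as [c [Hc1 Hc2]]; [lra|intros; apply Hd; lra|].
    rewrite Hc1, Rabs_mult, (Rabs_right (h - 0)) by lra.
    replace (h - 0) with h by ring. apply Rmult_le_compat_r; [lra|]. apply Hb; lra.
Qed.

Lemma two_step g g1 g2 h K : 0 <= h ->
  (forall s, 0 <= s <= h -> derivable_pt_lim g s (g1 s) /\ derivable_pt_lim g1 s (g2 s)) ->
  g 0 = 0 -> g1 0 = 0 ->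
  (forall s, 0 <= s <= h -> Rabs (g2 s) <= K) ->
  Rabs (g h) <= K * h * h.
Proof.
  intros Hh Hd H0 H10 Hb.
  assert (HK : 0 <= K) by (apply Rle_trans with (Rabs (g2 0)); [apply Rabs_pos|apply Hb; lra]).
  assert (H1 : forall t, 0 <= t <= h -> Rabs (g1 t) <= K * h).
  { intros t Ht. replace (g1 t) with (g1 t - g1 0) by (rewrite H10; ring).
    apply Rle_trans with (K * t).
    apply (mvt_bound g1 g2); [lra| intros; apply Hd; lra | intros; apply Hb; lra].
    apply Rmult_le_compat_l; lra. }
  replace (g h) with (g h - g 0) by (rewrite H0; ring).
  apply (mvt_bound g g1); [lra| intros; apply Hd; lra | exact H1].
Qed.

Lemma cont_near f x eps : continuity_pt f x -> 0 < eps ->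
  exists del, 0 < del /\ forall s, Rabs s < del ->
    Rabs (f (x + s) - f x) < eps /\ Rabs (f (x - s) - f x) < eps.
Proof.
  intros H He. destruct (H eps He) as [a [Ha H']]. exists a. split; auto.
  intros s Hs. destruct (Req_dec s 0) as [->|Hn].
  - replace (x + 0) with x by ring. replace (x - 0) with x by ring.
    rewrite Rminus_diag, Rabs_R0; lra.
  - split; apply H'; unfold D_x, no_cond; simpl; unfold R_dist; (split; [split; [exact I| intro; apply Hn; lra] |]).
    + replace (x + s - x) with s by ring; auto.
    + replace (x - s - x) with (- s) by ring; rewrite Rabs_Ropp; auto.
Qed.

Definition dsf (e d1 : R -> R) mu (a : R) : R :=
  ((0 * (1 - 2 * a) - (0 - 2 * 1) * 1) / ((1 - 2 * a) * (1 - 2 * a))) *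
    ((e (1 - a) + e a - 2 * mu) / (e (1 - a) - e a)) +
  (1 / (1 - 2 * a)) *
  ((((- d1 (1 - a) + d1 a - 0) * (e (1 - a) - e a)) - ((- d1 (1 - a) - d1 a) * (e (1 - a) + e a - 2 * mu)))
     / ((e (1 - a) - e a) * (e (1 - a) - e a))).

Lemma ds_deriv e d1 mu a : 0 < a < 1/2 ->
  derivable_pt_lim e a (d1 a) -> derivable_pt_lim e (1 - a) (d1 (1 - a)) ->
  e (1 - a) <> e a ->
  derivable_pt_lim (s2 e mu) a (dsf e d1 mu a).
Proof.
  intros Ha H1 H2 Hne. unfold s2, dsf.
  eapply dval.
  apply (dmult (fun y => 1 / (1 - 2 * y)) (fun y => (e (1 - y) + e y - 2 * mu) / (e (1 - y) - e y))).
  - apply (ddiv (fun _ => 1) (fun y => 1 - 2 * y)).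
    apply dconst.
    apply (dminus (fun _ => 1) (fun y => 2 * y)). apply dconst.
    apply (derivable_pt_lim_scal (fun y => y)). apply did. lra.
  - apply (ddiv (fun y => e (1 - y) + e y - 2 * mu) (fun y => e (1 - y) - e y)).
    apply (dminus (fun y => e (1 - y) + e y) (fun _ => 2 * mu)).
    apply (dplus (fun y => e (1 - y)) e). apply (onem e). exact H2. exact H1. apply dconst.
    apply (dminus (fun y => e (1 - y)) e). apply (onem e). exact H2. exact H1.
    intro H; apply Hne; lra.
  - simpl. field. split; [|lra]. intro H; apply Hne; lra.
Qed.

Lemma ds_form e d1 mu h : 0 < h -> e (1/2 + h) <> e (1/2 - h) ->
  dsf e d1 mu (1/2 - h) =
  - ((e (1/2 + h) - e (1/2 - h)) * (h * (d1 (1/2 + h) - d1 (1/2 - h)) - 2 * (e (1/2 + h) + e (1/2 - h) - 2 * mu))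
     - (e (1/2 + h) + e (1/2 - h) - 2 * mu) * (h * (d1 (1/2 + h) + d1 (1/2 - h)) - (e (1/2 + h) - e (1/2 - h))))
  / (2 * (h * h) * ((e (1/2 + h) - e (1/2 - h)) * (e (1/2 + h) - e (1/2 - h)))).
Proof.
  intros Hh Hne. unfold dsf. replace (1 - (1/2 - h)) with (1/2 + h) by field.
  field. split; [|lra]. intro H; apply Hne; lra.
Qed.

Lemma abs_near x y k : Rabs (x - y) < k -> Rabs x <= Rabs y + k.
Proof. intro H. pose proof (Rabs_triang_inv x y). lra. Qed.

Lemma final_ineq X h a1 C eta eps N :
  0 < h -> 0 < a1 -> 0 < C -> 0 < eps -> a1 * h <= X ->
  eta * (a1 + C) = eps * a1 * a1 -> 0 < eta ->
  Rabs N <= X * (h * eta * h * h) + C * h * h * (h * eta * h) ->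
  Rabs (- N / (2 * (h * h) * (X * X))) < eps.
Proof.
  intros Hh Ha HC He HX Hk Het HN.
  assert (HX0 : 0 < X) by nra.
  assert (Hden : 0 < 2 * (h * h) * (X * X)) by (repeat apply Rmult_lt_0_compat; lra).
  assert (P1 : a1 * (X + C * h) <= X * (a1 + C)) by nra.
  assert (P2 : a1 * (eta * (h * h * h) * (X + C * h)) <= (eps * a1 * a1) * (h * h * h) * X).
  { rewrite <- Hk. assert (0 <= eta * (h * h * h)) by (apply Rmult_le_pos; [lra| repeat apply Rmult_le_pos; lra]). nra. }
  assert (P3 : eta * (h * h * h) * (X + C * h) <= eps * a1 * (h * h * h) * X).
  { apply (Rmult_le_reg_l a1); [lra|]. nra. }
  assert (P4 : eps * a1 * (h * h * h) * X <= eps * (h * h) * (X * X)).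
  { assert (0 <= eps * (h * h) * X) by (repeat apply Rmult_le_pos; lra). nra. }
  assert (HN2 : Rabs N < eps * (2 * (h * h) * (X * X))).
  { assert (0 < eps * (h * h) * (X * X)) by (repeat apply Rmult_lt_0_compat; lra).
    assert (X * (h * eta * h * h) + C * h * h * (h * eta * h) = eta * (h * h * h) * (X + C * h)) by ring.
    lra. }
  unfold Rdiv. rewrite Rabs_mult, Rabs_Ropp, Rabs_inv, (Rabs_right _ (Rgt_ge _ _ Hden)).
  apply (Rmult_lt_reg_r (2 * (h * h) * (X * X))); [lra|].
  rewrite Rmult_assoc, Rinv_l by lra. lra.
Qed.


Lemma part2 e d1 d2 d3 mu :
 (forall a, 0 < a < 1 -> derivable_pt_lim e a (d1 a) /\ derivable_pt_lim d1 a (d2 a) /\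
    derivable_pt_lim d2 a (d3 a)) ->
 continuity_pt d3 (1/2) -> e (1/2) = mu -> 0 < d1 (1/2) ->
 (forall a, 0 < a < 1/2 -> e (1 - a) <> e a) ->
 exists ds, (forall alpha, 0 < alpha < 1/2 -> derivable_pt_lim (s2 e mu) alpha (ds alpha)) /\
   (forall eps, 0 < eps -> exists delta, 0 < delta /\
      forall alpha, 1/2 - delta < alpha < 1/2 -> Rabs (ds alpha) < eps).
Proof.
  intros Hd Hc3 He Ha1 Hne.
  exists (dsf e d1 mu). split.
  { intros a Ha. apply ds_deriv; auto. apply Hd; lra. apply Hd; lra. }
  intros eps Heps.
  set (a1 := d1 (1/2)) in *. set (a2 := d2 (1/2)).
  assert (Hc1 : continuity_pt d1 (1/2)).
  { apply derivable_continuous_pt. exists (d2 (1/2)). apply Hd; lra. }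
  assert (Hc2 : continuity_pt d2 (1/2)).
  { apply derivable_continuous_pt. exists (d3 (1/2)). apply Hd; lra. }
  destruct (cont_near d1 (1/2) (a1/2) Hc1) as [δ1 [Hδ1 H1]]; [lra|].
  destruct (cont_near d2 (1/2) 1 Hc2) as [δ2 [Hδ2 H2]]; [lra|].
  set (C := 2 * (Rabs a2 + 1)).
  assert (HC : 0 < C) by (unfold C; pose proof (Rabs_pos a2); lra).
  set (eta := eps * a1 * a1 / (a1 + C)).
  assert (Heta : 0 < eta).
  { unfold eta; apply Rdiv_lt_0_compat; [repeat apply Rmult_lt_0_compat|]; lra. }
  assert (Hk : eta * (a1 + C) = eps * a1 * a1) by (unfold eta; field; lra).
  destruct (cont_near d2 (1/2) (eta/2) Hc2) as [δ3 [Hδ3 H3]]; [lra|].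
  destruct (cont_near d3 (1/2) (eta/2) Hc3) as [δ4 [Hδ4 H4]]; [lra|].
  set (δ := Rmin (Rmin (1/2) δ1) (Rmin (Rmin δ2 δ3) δ4)).
  exists δ. split.
  { unfold δ; repeat apply Rmin_pos; lra. }
  assert (Hm : δ <= 1/2 /\ δ <= δ1 /\ δ <= δ2 /\ δ <= δ3 /\ δ <= δ4).
  { unfold δ.
    pose proof (Rmin_l (Rmin (1/2) δ1) (Rmin (Rmin δ2 δ3) δ4)).
    pose proof (Rmin_r (Rmin (1/2) δ1) (Rmin (Rmin δ2 δ3) δ4)).
    pose proof (Rmin_l (1/2) δ1). pose proof (Rmin_r (1/2) δ1).
    pose proof (Rmin_l (Rmin δ2 δ3) δ4). pose proof (Rmin_r (Rmin δ2 δ3) δ4).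
    pose proof (Rmin_l δ2 δ3). pose proof (Rmin_r δ2 δ3). lra. }
  intros alpha Halpha.
  set (h := 1/2 - alpha).
  assert (Hh : 0 < h < δ) by (unfold h; lra).
  replace alpha with (1/2 - h) by (unfold h; lra).
  assert (HD : forall s, 0 <= s <= h ->
    (derivable_pt_lim e (1/2 + s) (d1 (1/2 + s)) /\ derivable_pt_lim d1 (1/2 + s) (d2 (1/2 + s)) /\
     derivable_pt_lim d2 (1/2 + s) (d3 (1/2 + s))) /\
    (derivable_pt_lim e (1/2 - s) (d1 (1/2 - s)) /\ derivable_pt_lim d1 (1/2 - s) (d2 (1/2 - s)) /\
     derivable_pt_lim d2 (1/2 - s) (d3 (1/2 - s)))).
  { intros s Hs. split; apply Hd; lra. }
  assert (Habs : forall s, 0 <= s <= h -> Rabs s < δ1 /\ Rabs s < δ2 /\ Rabs s < δ3 /\ Rabs s < δ4).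
  { intros s Hs. rewrite Rabs_right by lra. lra. }
  assert (HDl : a1 * h <= e (1/2 + h) - e (1/2 - h)).
  { destruct (MVT_cor2 (fun s => e (1/2 + s) - e (1/2 - s))
       (fun s => d1 (1/2 + s) + d1 (1/2 - s)) 0 h) as [c [Hc Hcc]]; [lra| |].
    - intros c Hc. eapply dval. apply dminus. apply shiftp, HD, Hc. apply shiftm, HD, Hc. cbv beta; ring.
    - rewrite Rplus_0_r, Rminus_0_r in Hc.
      destruct (H1 c) as [Hp Hq]; [apply Habs; lra|].
      apply Rabs_def2 in Hp. apply Rabs_def2 in Hq. fold a1 in Hp, Hq.
      assert (a1 <= d1 (1/2 + c) + d1 (1/2 - c)) by lra. nra. }
  assert (HA : Rabs (e (1/2 + h) + e (1/2 - h) - 2 * mu) <= C * h * h).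
  { apply (two_step (fun s => e (1/2 + s) + e (1/2 - s) - 2 * mu)
      (fun s => d1 (1/2 + s) - d1 (1/2 - s)) (fun s => d2 (1/2 + s) + d2 (1/2 - s))); [lra| | | |].
    - intros s Hs. split.
      + eapply dval. apply dminus. apply dplus. apply shiftp, HD, Hs. apply shiftm, HD, Hs.
        apply dconst. cbv beta; ring.
      + eapply dval. apply dminus. apply shiftp, HD, Hs. apply shiftm, HD, Hs. cbv beta; ring.
    - rewrite Rplus_0_r, Rminus_0_r, He. cbv beta; ring.
    - rewrite Rplus_0_r, Rminus_0_r. cbv beta; ring.
    - intros s Hs. destruct (H2 s) as [Hp Hq]; [apply Habs; lra|].
      apply abs_near in Hp. apply abs_near in Hq. fold a2 in Hp, Hq.
      pose proof (Rabs_triang (d2 (1/2 + s)) (d2 (1/2 - s))). unfold C. lra. }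
  assert (HV : Rabs (h * (d1 (1/2 + h) + d1 (1/2 - h)) - (e (1/2 + h) - e (1/2 - h))) <= h * eta * h).
  { pose (v := fun s => s * (d1 (1/2 + s) + d1 (1/2 - s)) - (e (1/2 + s) - e (1/2 - s))).
    replace (h * (d1 (1/2 + h) + d1 (1/2 - h)) - (e (1/2 + h) - e (1/2 - h))) with (v h - v 0)
      by (unfold v; cbv beta; rewrite Rplus_0_r, Rminus_0_r; ring).
    apply (mvt_bound v (fun s => s * (d2 (1/2 + s) - d2 (1/2 - s)))); [lra| |].
    - intros s Hs. eapply dval. apply dminus. apply (dmult (fun s => s)). apply did.
      apply dplus. apply shiftp, HD, Hs. apply shiftm, HD, Hs.
      apply dminus. apply shiftp, HD, Hs. apply shiftm, HD, Hs. cbv beta; ring.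
    - intros s Hs. destruct (H3 s) as [Hp Hq]; [apply Habs; lra|].
      rewrite Rabs_mult, (Rabs_right s) by lra.
      apply Rmult_le_compat; [lra|apply Rabs_pos|lra|].
      replace (d2 (1/2 + s) - d2 (1/2 - s)) with ((d2 (1/2 + s) - d2 (1/2)) - (d2 (1/2 - s) - d2 (1/2))) by ring.
      pose proof (Rabs_triang (d2 (1/2 + s) - d2 (1/2)) (- (d2 (1/2 - s) - d2 (1/2)))).
      rewrite Rabs_Ropp in H. unfold Rminus in H, Hp, Hq |- *. lra. }
  assert (HU : Rabs (h * (d1 (1/2 + h) - d1 (1/2 - h)) - 2 * (e (1/2 + h) + e (1/2 - h) - 2 * mu))
               <= h * eta * h * h).
  { apply (two_step (fun s => s * (d1 (1/2 + s) - d1 (1/2 - s)) - 2 * (e (1/2 + s) + e (1/2 - s) - 2 * mu))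
      (fun s => s * (d2 (1/2 + s) + d2 (1/2 - s)) - (d1 (1/2 + s) - d1 (1/2 - s)))
      (fun s => s * (d3 (1/2 + s) - d3 (1/2 - s)))); [lra| | | |].
    - intros s Hs. split.
      + eapply dval. apply dminus. apply (dmult (fun s => s)). apply did.
        apply dminus. apply shiftp, HD, Hs. apply shiftm, HD, Hs.
        apply (derivable_pt_lim_scal (fun s => e (1/2 + s) + e (1/2 - s) - 2 * mu)).
        apply dminus. apply dplus. apply shiftp, HD, Hs. apply shiftm, HD, Hs. apply dconst.
        cbv beta; ring.
      + eapply dval. apply dminus. apply (dmult (fun s => s)). apply did.
        apply dplus. apply shiftp, HD, Hs. apply shiftm, HD, Hs.
        apply dminus. apply shiftp, HD, Hs. apply shiftm, HD, Hs. cbv beta; ring.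
    - rewrite Rplus_0_r, Rminus_0_r, He. cbv beta; ring.
    - rewrite Rplus_0_r, Rminus_0_r. cbv beta; ring.
    - intros s Hs. destruct (H4 s) as [Hp Hq]; [apply Habs; lra|].
      rewrite Rabs_mult, (Rabs_right s) by lra.
      apply Rmult_le_compat; [lra|apply Rabs_pos|lra|].
      replace (d3 (1/2 + s) - d3 (1/2 - s)) with ((d3 (1/2 + s) - d3 (1/2)) - (d3 (1/2 - s) - d3 (1/2))) by ring.
      pose proof (Rabs_triang (d3 (1/2 + s) - d3 (1/2)) (- (d3 (1/2 - s) - d3 (1/2)))).
      rewrite Rabs_Ropp in H. unfold Rminus in H, Hp, Hq |- *. lra. }
  assert (Hne' : e (1/2 + h) <> e (1/2 - h)).
  { intro Heq. assert (0 < a1 * h) by (apply Rmult_lt_0_compat; lra). lra. }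
  rewrite ds_form by lra || exact Hne'.
  apply (final_ineq _ h a1 C eta eps); try lra.
  set (X := e (1/2 + h) - e (1/2 - h)) in *.
  set (Av := e (1/2 + h) + e (1/2 - h) - 2 * mu) in *.
  set (Uv := h * (d1 (1/2 + h) - d1 (1/2 - h)) - 2 * Av) in *.
  set (Vv := h * (d1 (1/2 + h) + d1 (1/2 - h)) - X) in *.
  assert (0 < X) by (assert (0 < a1 * h) by (apply Rmult_lt_0_compat; lra); lra).
  pose proof (Rabs_triang (X * Uv) (- (Av * Vv))).
  rewrite Rabs_Ropp, !Rabs_mult, (Rabs_right X) in H0 by lra.
  assert (X * Rabs Uv <= X * (h * eta * h * h)) by (apply Rmult_le_compat_l; lra).
  assert (Rabs Av * Rabs Vv <= C * h * h * (h * eta * h)).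
  { apply Rmult_le_compat; try apply Rabs_pos; lra. }
  unfold Rminus at 1. lra.
Qed.

Lemma zero_of_small x : (forall eps, 0 < eps -> Rabs x < eps) -> x = 0.
Proof.
  intro H. destruct (Req_dec x 0) as [|Hn]; auto.
  assert (0 < Rabs x) by (apply Rabs_pos_lt; auto). specialize (H _ H0). lra.
Qed.
Lemma nonneg_of_small x : (forall eps, 0 < eps -> - eps < x) -> 0 <= x.
Proof.
  intro H. destruct (Rle_dec 0 x) as [|Hn]; auto.
  specialize (H (- x / 2)). lra.
Qed.

Section P.
Variable F : R -> R.
Hypothesis Hcdf : is_cdf F.
Hypothesis Hc : continuity F.

Lemma F01 x : 0 <= F x <= 1.
Proof.
  destruct Hcdf as [Hm [_ [H0 H1]]]. split.
  - apply nonneg_of_small. intros eps He. destruct (H0 eps He) as [M HM].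
    specialize (HM (Rmin M x) (Rmin_l _ _)). apply Rabs_def2 in HM.
    pose proof (Hm (Rmin M x) x (Rmin_r _ _)). lra.
  - assert (0 <= 1 - F x); [|lra]. apply nonneg_of_small. intros eps He.
    destruct (H1 eps He) as [M HM].
    specialize (HM (Rmax M x) (Rmax_l _ _)). apply Rabs_def2 in HM.
    pose proof (Hm x (Rmax M x) (Rmax_r _ _)). lra.
Qed.

Lemma Fcont x : continuous F x.
Proof. apply continuity_pt_filterlim. apply Hc. Qed.

Lemma Fex a b : ex_RInt F a b.
Proof. apply (ex_RInt_continuous (V:=R_CompleteNormedModule)). intros; apply Fcont. Qed.

Lemma Chas a b c : RInt F a b + RInt F b c = RInt F a c.
Proof. apply (RInt_Chasles (V:=R_CompleteNormedModule) F); apply Fex. Qed.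

Lemma RInt1F a b : RInt (fun x => 1 - F x) a b = (b - a) - RInt F a b.
Proof.
  assert (H := RInt_minus (V:=R_CompleteNormedModule) (fun _ => 1) F a b (ex_RInt_const a b 1) (Fex a b)).
  change (RInt (fun x => 1 - F x) a b = b - a - RInt F a b).
  unfold minus, plus, opp in H; simpl in H. change (RInt (fun x => 1 - F x) a b = RInt (fun _ => 1) a b - RInt F a b) in H.
  rewrite H, RInt_const. unfold minus, plus, opp, scal; simpl. unfold mult; simpl. ring.
Qed.

Lemma RIntF_bounds a b : a <= b -> 0 <= RInt F a b <= b - a.
Proof.
  intro Hab. split.
  - apply RInt_ge_0; auto. apply Fex. intros; apply F01.
  - assert (H := RInt_le F (fun _ => 1) a b Hab (Fex a b) (ex_RInt_const a b 1)).
    rewrite RInt_const in H. unfold scal in H; simpl in H; unfold mult in H; simpl in H.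
    rewrite Rmult_1_r in H. apply H. intros; apply F01.
Qed.

Lemma RInt_Reals' f a b (pr : Riemann_integrable f a b) : RiemannInt pr = RInt f a b.
Proof. symmetry; apply RInt_Reals. Qed.

Lemma Eneg_rel s t n1 n2 : Eneg F s n1 -> Eneg F t n2 -> n2 = n1 + RInt F s t.
Proof.
  intros H1 H2. apply Rminus_diag_uniq. apply zero_of_small. intros eps He.
  destruct (H1 (eps/2)) as [M1 HM1]; [lra|]. destruct (H2 (eps/2)) as [M2 HM2]; [lra|].
  destruct (HM1 (Rmin M1 M2) (Rmin_l _ _)) as [pr1 Hp1].
  destruct (HM2 (Rmin M1 M2) (Rmin_r _ _)) as [pr2 Hp2].
  rewrite RInt_Reals' in Hp1, Hp2. rewrite <- (Chas (Rmin M1 M2) s t) in Hp2.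
  apply Rabs_def2 in Hp1. apply Rabs_def2 in Hp2. apply Rabs_def1; lra.
Qed.

Lemma Epos_rel s t p1 p2 : Epos F s p1 -> Epos F t p2 -> p1 = p2 + ((t - s) - RInt F s t).
Proof.
  intros H1 H2. apply Rminus_diag_uniq. apply zero_of_small. intros eps He.
  destruct (H1 (eps/2)) as [M1 HM1]; [lra|]. destruct (H2 (eps/2)) as [M2 HM2]; [lra|].
  destruct (HM1 (Rmax M1 M2) (Rmax_l _ _)) as [pr1 Hp1].
  destruct (HM2 (Rmax M1 M2) (Rmax_r _ _)) as [pr2 Hp2].
  rewrite RInt_Reals', RInt1F in Hp1, Hp2.
  rewrite <- (Chas s t (Rmax M1 M2)) in Hp1.
  apply Rabs_def2 in Hp1. apply Rabs_def2 in Hp2. apply Rabs_def1; lra.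
Qed.

Lemma Eneg_nonneg s n0 : Eneg F 0 n0 -> 0 <= n0 + RInt F 0 s.
Proof.
  intros H. apply nonneg_of_small. intros eps He.
  destruct (H eps He) as [M HM].
  destruct (HM (Rmin M s) (Rmin_l _ _)) as [pr Hp].
  rewrite RInt_Reals' in Hp. apply Rabs_def2 in Hp.
  pose proof (Chas (Rmin M s) 0 s).
  pose proof (RIntF_bounds (Rmin M s) s (Rmin_r _ _)). lra.
Qed.

Lemma Epos_nonneg s p0 : Epos F 0 p0 -> 0 <= p0 - (s - RInt F 0 s).
Proof.
  intros H. apply nonneg_of_small. intros eps He.
  destruct (H eps He) as [M HM].
  destruct (HM (Rmax M s) (Rmax_l _ _)) as [pr Hp].
  rewrite RInt_Reals', RInt1F in Hp. apply Rabs_def2 in Hp.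
  pose proof (Chas 0 s (Rmax M s)).
  pose proof (RIntF_bounds s (Rmax M s) (Rmax_r _ _)). lra.
Qed.

Lemma RInt_c a b c : RInt (fun _ => c) a b = c * (b - a).
Proof. rewrite RInt_const. unfold scal; simpl; unfold mult; simpl. ring. Qed.

Lemma pos_all p0 n0 : Epos F 0 p0 -> Eneg F 0 n0 -> nondegenerate F ->
  forall t, 0 < 2 * (n0 + RInt F 0 t) + (p0 - n0) - t.
Proof.
  intros Hp Hn [x [Hx0 Hx1]] t.
  set (eps := Rmin (F x) (1 - F x) / 2).
  assert (Heps : 0 < eps) by (unfold eps; apply Rmin_case; lra).
  assert (Heps1 : eps <= F x / 2) by (unfold eps; pose proof (Rmin_l (F x) (1 - F x)); lra).
  assert (Heps2 : eps <= (1 - F x) / 2) by (unfold eps; pose proof (Rmin_r (F x) (1 - F x)); lra).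
  destruct (cont_near F x eps (Hc x) Heps) as [del [Hdel Hnear]].
  set (d := del / 2).
  assert (Hd : 0 < d) by (unfold d; lra).
  assert (HK : eps * d <= n0 + RInt F 0 x).
  { pose proof (Chas 0 (x - d) x). pose proof (Eneg_nonneg (x - d) n0 Hn).
    assert (eps * d <= RInt F (x - d) x).
    { assert (E : @eq R (RInt (fun _ => eps) (x - d) x) (eps * d)) by (rewrite RInt_c; ring). rewrite <- E.
      apply RInt_le; [lra| apply ex_RInt_const | apply Fex |].
      intros y Hy. destruct (Hnear (x - y)) as [_ Hq]; [rewrite Rabs_right by lra; unfold d in Hy; lra|].
      replace (x - (x - y)) with y in Hq by ring. apply Rabs_def2 in Hq. lra. }
    lra. }
  assert (HP : eps * d <= p0 - (x - RInt F 0 x)).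
  { pose proof (Chas 0 x (x + d)). pose proof (Epos_nonneg (x + d) p0 Hp).
    assert (RInt F x (x + d) <= (1 - eps) * d).
    { assert (E : @eq R (RInt (fun _ => 1 - eps) x (x + d)) ((1 - eps) * d)) by (rewrite RInt_c; ring). rewrite <- E.
      apply RInt_le; [lra| apply Fex | apply ex_RInt_const |].
      intros y Hy. destruct (Hnear (y - x)) as [Hq _]; [rewrite Rabs_right by lra; unfold d in Hy; lra|].
      replace (x + (y - x)) with y in Hq by ring. apply Rabs_def2 in Hq. lra. }
    lra. }
  destruct (Rle_dec x t) as [Hxt|Hxt].
  - pose proof (Chas 0 x t). pose proof (RIntF_bounds x t Hxt).
    pose proof (Epos_nonneg t p0 Hp). assert (0 < eps * d) by (apply Rmult_lt_0_compat; lra). lra.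
  - pose proof (Chas 0 t x). pose proof (RIntF_bounds t x ltac:(lra)).
    pose proof (Eneg_nonneg t n0 Hn). assert (0 < eps * d) by (apply Rmult_lt_0_compat; lra). lra.
Qed.

End P.

Theorem mainTheorem4 (F : R -> R) (e : R -> R) (mu : R) :
  is_cdf F ->
  nondegenerate F ->
  finite_first_moment F ->
  continuity F ->
  is_mean F mu ->
  (forall tau, 0 < tau < 1 -> is_expectile F tau (e tau)) ->
  C4_on_01 e ->
  exists ds : R -> R,
    (forall alpha, 0 < alpha < 1 / 2 ->
        derivable_pt_lim (s2 e mu) alpha (ds alpha)) /\
    (forall eps, 0 < eps -> exists delta, 0 < delta /\
        forall alpha, 1 / 2 - delta < alpha < 1 / 2 -> Rabs (ds alpha) < eps).
Proof.
  intros Hcdf Hnd Hfm Hcont Hmean Hexp [d1 [d2 [d3 [d4 HC4]]]].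
  destruct Hmean as [p0 [n0 [Hp0 [Hn0 Hmu]]]].
  pose (K := fun s => n0 + RInt F 0 s).
  assert (Hrel : forall tau, 0 < tau < 1 ->
     tau * (K (e tau) + mu - e tau) = (1 - tau) * K (e tau)).
  { intros tau Ht. destruct (Hexp tau Ht) as [p [n [Hp [Hn Heq]]]].
    pose proof (Eneg_rel F Hcont 0 (e tau) n0 n Hn0 Hn).
    pose proof (Epos_rel F Hcont 0 (e tau) p0 p Hp0 Hp).
    replace (K (e tau) + mu - e tau) with p by (unfold K; lra).
    replace (K (e tau)) with n by (unfold K; lra). exact Heq. }
  assert (Hpos : forall t, 0 < 2 * K t + mu - t).
  { intro t. pose proof (pos_all F Hcdf Hcont p0 n0 Hp0 Hn0 Hnd t). unfold K. lra. }
  assert (He : e (1/2) = mu).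
  { pose proof (Hrel (1/2) ltac:(lra)). lra. }
  assert (Hne : forall a, 0 < a < 1/2 -> e (1 - a) <> e a).
  { intros a Ha Heq. pose proof (Hrel a ltac:(lra)). pose proof (Hrel (1 - a) ltac:(lra)).
    rewrite Heq in H0. pose proof (Hpos (e a)).
    assert (0 < (1 - 2 * a) * (2 * K (e a) + mu - e a)) by (apply Rmult_lt_0_compat; lra).
    nra. }
  assert (HK : forall x, derivable_pt_lim K x (F x)).
  { intro x. unfold K. eapply dval. apply (dplus (fun _ => n0) (fun s => RInt F 0 s)).
    apply dconst. apply is_derive_Reals.
    apply (is_derive_RInt (V:=R_NormedModule) F (fun s => RInt F 0 s) 0 x).
    apply filter_forall. intro b. apply (RInt_correct (V:=R_CompleteNormedModule)). apply Fex; auto.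
    apply Fcont; auto. ring. }
  assert (Hd1 : 0 < d1 (1/2)).
  { pose (Phi := fun tau => tau * (K (e tau) + mu - e tau) - (1 - tau) * K (e tau)).
    destruct (HC4 (1/2) ltac:(lra)) as [He1 _].
    assert (HP : derivable_pt_lim Phi (1/2) (2 * K mu - d1 (1/2) / 2)).
    { unfold Phi. eapply dval.
      apply (dminus (fun tau => tau * (K (e tau) + mu - e tau)) (fun tau => (1 - tau) * K (e tau))).
      apply (dmult (fun tau => tau) (fun tau => K (e tau) + mu - e tau)). apply did.
      apply (dminus (fun tau => K (e tau) + mu) e). apply (dplus (fun tau => K (e tau)) (fun _ => mu)).
      apply (dcomp K e). exact He1. apply HK. apply dconst. exact He1.
      apply (dmult (fun tau => 1 - tau) (fun tau => K (e tau))).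
      apply (dminus (fun _ => 1) (fun tau => tau)). apply dconst. apply did.
      apply (dcomp K e). exact He1. apply HK.
      cbv beta. rewrite He. field. }
    assert (H0 : derivable_pt_lim Phi (1/2) 0).
    { apply is_derive_Reals. apply (is_derive_ext_loc (fun _ => 0)).
      - assert (Hhalf : 0 < 1/2) by lra.
        exists (mkposreal _ Hhalf). intros y Hy.
        unfold ball in Hy; simpl in Hy. unfold AbsRing_ball, abs, minus, plus, opp in Hy; simpl in Hy.
        apply Rabs_def2 in Hy. assert (E : Phi y = 0) by (unfold Phi; rewrite (Hrel y) by lra; ring). exact (eq_sym E).
      - apply is_derive_Reals. apply dconst. }
    pose proof (uniqueness_limite Phi (1/2) _ _ HP H0).
    pose proof (Hpos mu). lra. }
  assert (Hd : forall a, 0 < a < 1 -> derivable_pt_lim e a (d1 a) /\ derivable_pt_lim d1 a (d2 a) /\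
    derivable_pt_lim d2 a (d3 a)).
  { intros a Ha. destruct (HC4 a Ha) as [? [? [? _]]]. auto. }
  assert (Hc3 : continuity_pt d3 (1/2)).
  { apply derivable_continuous_pt. exists (d4 (1/2)). apply HC4; lra. }
  exact (part2 e d1 d2 d3 mu Hd Hc3 He Hd1 Hne).
Qed.
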